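(* Let $n\ge2$ and let $\rho=p_0|0^n\rangle\langle0^n|+\sum_{i,j=1}^nB_{ij}|e_i\rangle\langle e_j|$ be an $n$-qubit density operator, where $B$ is a real symmetric positive semidefinite $n\times n$ matrix and $p_0+\mathrm{Tr}B=1$. Then $\rho\in\mathcal S$ if and only if $B_{ii}\ge\sum_{j\ne i}|B_{ij}|$ for every $i=1,\dots,n$.
   Context: $|e_i\rangle$ denotes the computational-basis state with a $1$ on qubit $i$ and $0$ elsewhere. $\mathcal S$ is the $n$-qubit stabilizer polytope, the convex hull of the density matrices of pure stabilizer states $C|0^n\rangle$, $C$ an $n$-qubit Clifford unitary. *)

(* Defs.v *)
From HB Require Import structures.
From mathcomp Require Import all_boot all_order all_algebra.
From mathcomp Require Import algC.
Set Implicit Arguments. Unset Strict Implicit. Unset Printing Implicit Defensive.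
Import Order.TTheory GRing.Theory Num.Theory.
Local Open Scope ring_scope.

Definition adj (m k : nat) (A : 'M[algC]_(m, k)) : 'M[algC]_(k, m) :=
  (map_mx Num.conj A)^T.

Definition hermitian (m : nat) (A : 'M[algC]_m) : Prop := adj A = A.

Definition psd (m : nat) (A : 'M[algC]_m) : Prop :=
  hermitian A /\ forall v : 'cV[algC]_m, 0 <= (adj v *m A *m v) 0 0.

Definition density (m : nat) (A : 'M[algC]_m) : Prop :=
  psd A /\ \tr A = 1.

Definition unitary (m : nat) (U : 'M[algC]_m) : Prop := U *m adj U = 1%:M.

(* value of qubit q in the computational basis index k *)
Definition bit (q k : nat) : bool := odd (k %/ 2 ^ q).

(* single-qubit Paulis I, X, Y, Z (codes 0,1,2,3); entry (r, c) *)
Definition pauli1 (a : 'I_4) (r c : bool) : algC :=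
  match val a with
  | 0 => if r == c then 1 else 0
  | 1 => if r == c then 0 else 1
  | 2 => if r == c then 0 else (if c then - 'i else 'i)
  | _ => if r == c then (if r then -1 else 1) else 0
  end.

Definition pauli (n : nat) (p : 'I_n -> 'I_4) : 'M[algC]_(2 ^ n) :=
  \matrix_(r, c) \prod_(q < n) pauli1 (p q) (bit q r) (bit q c).

(* Clifford unitaries: unitaries normalizing the Pauli group
   { c P : c in {1,-1,i,-i}, P Pauli string } *)
Definition clifford (n : nat) (U : 'M[algC]_(2 ^ n)) : Prop :=
  unitary U /\
  forall (c : algC) (p : 'I_n -> 'I_4), c ^+ 4 = 1 ->
    exists (c' : algC) (p' : 'I_n -> 'I_4),
      c' ^+ 4 = 1 /\ U *m (c *: pauli p) *m adj U = c' *: pauli p'.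

Definition ket (n : nat) (k : 'I_(2 ^ n)) : 'cV[algC]_(2 ^ n) :=
  \col_r (if r == k then 1 else 0).

Lemma zero_lt_exp2 (n : nat) : (0 < 2 ^ n)%N.
Proof. by rewrite expn_gt0. Qed.

Definition ket0 (n : nat) : 'cV[algC]_(2 ^ n) := ket (Ordinal (zero_lt_exp2 n)).

(* |e_i> : qubit i is 1, others 0, i.e. basis index 2^i *)
Lemma exp2_lt (n : nat) (i : 'I_n) : (2 ^ i < 2 ^ n)%N.
Proof. by rewrite ltn_exp2l. Qed.

Definition ket_e (n : nat) (i : 'I_n) : 'cV[algC]_(2 ^ n) :=
  ket (Ordinal (exp2_lt i)).

Definition stab_state (n : nat) (C : 'M[algC]_(2 ^ n)) : 'M[algC]_(2 ^ n) :=
  (C *m ket0 n) *m adj (C *m ket0 n).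

Definition in_stab_polytope (n : nat) (rho : 'M[algC]_(2 ^ n)) : Prop :=
  exists (m : nat) (w : 'I_m -> algC) (C : 'I_m -> 'M[algC]_(2 ^ n)),
    (forall k, 0 <= w k) /\ \sum_(k < m) w k = 1 /\
    (forall k, clifford (C k)) /\
    rho = \sum_(k < m) w k *: stab_state (C k).

Definition rho_of (n : nat) (p0 : algC) (B : 'M[algC]_n) : 'M[algC]_(2 ^ n) :=
  p0 *: (ket0 n *m adj (ket0 n)) +
  \sum_(i < n) \sum_(j < n) B i j *: (ket_e i *m adj (ket_e j)).

(* Main.v *)
Require Import Defs.
From HB Require Import structures.
From mathcomp Require Import all_boot all_order all_algebra.
From mathcomp Require Import algC.
From mathcomp Require Import zify ring.
Import Order.TTheory GRing.Theory Num.Theory.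
Local Open Scope ring_scope.
Set Implicit Arguments. Unset Strict Implicit. Unset Printing Implicit Defensive.
Lemma bitS q a : bit q.+1 a = bit q a./2.
Proof. by rewrite /bit expnS divnMA divn2. Qed.

Lemma bit0n q : bit q 0 = false.
Proof. by rewrite /bit div0n. Qed.

Lemma bit_inj n a b : (a < 2 ^ n)%N -> (b < 2 ^ n)%N ->
  (forall q, (q < n)%N -> bit q a = bit q b) -> a = b.
Proof.
elim: n a b => [|n IH] a b.
  by rewrite expn0 !ltnS !leqn0 => /eqP -> /eqP ->.
rewrite expnS => Ha Hb H.
have h0 : odd a = odd b by have := H 0%N isT; rewrite /bit !divn1.
have h1 : a./2 = b./2.
  apply: IH.
  - by rewrite -divn2 ltn_divLR // mulnC.
  - by rewrite -divn2 ltn_divLR // mulnC.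
  by move=> q Hq; rewrite -!bitS; apply: H.
by rewrite -(odd_double_half a) -(odd_double_half b) h0 h1.
Qed.

Fixpoint numb (f : nat -> bool) (n : nat) : nat :=
  match n with 0 => 0 | n'.+1 => (f 0%N : nat) + (numb (fun q => f q.+1) n').*2 end.

Lemma numb_lt f n : (numb f n < 2 ^ n)%N.
Proof.
elim: n f => [|n IH] f //=.
rewrite expnS mul2n; have := IH (fun q => f q.+1).
case: (f 0%N) => /=; rewrite -!muln2; lia.
Qed.

Lemma bit_numb f n q : (q < n)%N -> bit q (numb f n) = f q.
Proof.
elim: n f q => [|n IH] f [|q] //= Hq.
  by rewrite /bit divn1 oddD odd_double addbF; case: (f 0%N).
rewrite bitS (_ : (numb f n.+1)./2 = numb (fun q => f q.+1) n) ?IH //=.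
by rewrite halfD odd_double andbF doubleK; case: (f 0%N).
Qed.

Lemma bit_exp2 q i : bit q (2 ^ i) = (q == i).
Proof.
rewrite /bit; case: (ltngtP q i) => H.
- rewrite -(subnK (ltnW H)) expnD mulnK ?expn_gt0 // oddX orbF.
  by rewrite subn_eq0 leqNgt H.
- by rewrite divn_small ?ltn_exp2l.
- by rewrite H divnn expn_gt0.
Qed.


Definition tens n (f : 'I_n -> bool -> bool -> algC) : 'M[algC]_(2 ^ n) :=
  \matrix_(r, c) \prod_(q < n) f q (bit q r) (bit q c).

Lemma pauliE n (p : 'I_n -> 'I_4) : pauli p = tens (fun q => pauli1 (p q)).
Proof. by []. Qed.

Definition ext n (b : {ffun 'I_n -> bool}) (q : nat) : bool :=
  match insub q with Some q' => b q' | None => false end.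

Lemma extE n (b : {ffun 'I_n -> bool}) (q : 'I_n) : ext b q = b q.
Proof. by rewrite /ext valK. Qed.

Definition ofb n (b : {ffun 'I_n -> bool}) : 'I_(2 ^ n) := Ordinal (numb_lt (ext b) n).

Lemma bit_ofb n (b : {ffun 'I_n -> bool}) (q : 'I_n) : bit q (ofb b) = b q.
Proof. by rewrite /ofb /= bit_numb // extE. Qed.

Lemma sum_bits n (G : 'I_(2 ^ n) -> algC) :
  \sum_(t < 2 ^ n) G t = \sum_(b : {ffun 'I_n -> bool}) G (ofb b).
Proof.
apply: (reindex (@ofb n)).
exists (fun t : 'I_(2 ^ n) => [ffun q : 'I_n => bit q t]) => b _.
  by apply/ffunP => q; rewrite ffunE bit_ofb.
apply/val_inj/bit_inj; [exact: numb_lt | exact: ltn_ord | move=> q Hq /=].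
by rewrite (bit_numb _ Hq) /ext insubT ffunE.
Qed.

Definition mul2 (f g : bool -> bool -> algC) (r c : bool) : algC :=
  f r true * g true c + f r false * g false c.

Lemma tens_mul n (f g : 'I_n -> bool -> bool -> algC) :
  tens f *m tens g = tens (fun q => mul2 (f q) (g q)).
Proof.
apply/matrixP => r c; rewrite !mxE.
under eq_bigr do rewrite !mxE -big_split /=.
rewrite sum_bits.
under eq_bigr do under eq_bigr do rewrite !bit_ofb.
rewrite -(bigA_distr_bigA (fun q (x : bool) => f q (bit q r) x * g q x (bit q c))) /=.
by apply: eq_bigr => q _; rewrite big_bool.
Qed.

Lemma bit_eqP n (r c : 'I_(2 ^ n)) : (r == c) = [forall q : 'I_n, bit q r == bit q c].
Proof.
apply/eqP/forallP => [-> //|H]; apply/val_inj/(@bit_inj n); [exact: ltn_ord | exact: ltn_ord | move=> q Hq].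
by apply/eqP: (H (Ordinal Hq)).
Qed.

Lemma prod_ind n (P : 'I_n -> bool) :
  \prod_(q < n) ((P q)%:R : algC) = ([forall q, P q])%:R.
Proof.
case: (boolP [forall q, P q]) => [/forallP H | /forallPn [q Hq]].
  by rewrite big1 // => q _; rewrite H.
by rewrite (bigD1 q) //= (negbTE Hq) mul0r.
Qed.

Lemma tens1 n : tens (fun (_ : 'I_n) (r c : bool) => ((r == c)%:R : algC)) = 1%:M.
Proof.
by apply/matrixP => r c; rewrite !mxE prod_ind bit_eqP.
Qed.

Lemma tens_adj n (f : 'I_n -> bool -> bool -> algC) :
  adj (tens f) = tens (fun q r c => (f q c r)^*).
Proof.
by apply/matrixP => r c; rewrite !mxE rmorph_prod.
Qed.

Lemma tens_ket0 n (f : 'I_n -> bool -> bool -> algC) (r : 'I_(2 ^ n)) :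
  (tens f *m ket0 n) r 0 = \prod_(q < n) f q (bit q r) false.
Proof.
rewrite mxE (bigD1 (Ordinal (zero_lt_exp2 n))) //= big1 => [|t Ht].
  by rewrite !mxE eqxx mulr1 addr0; apply: eq_bigr => q _; rewrite bit0n.
by rewrite !mxE (negbTE Ht) mulr0.
Qed.


Definition o0 : 'I_4 := Ordinal (isT : (0 < 4)%N).
Definition o1 : 'I_4 := Ordinal (isT : (1 < 4)%N).
Definition o2 : 'I_4 := Ordinal (isT : (2 < 4)%N).
Definition o3 : 'I_4 := Ordinal (isT : (3 < 4)%N).

Definition flip (a : 'I_4) : bool := (val a == 1%N) || (val a == 2%N).

Lemma iiE : 'i * 'i = -1 :> algC.
Proof. by rewrite -expr2 sqrCi. Qed.

Lemma ph4_1 : (1 : algC) ^+ 4 = 1. Proof. by rewrite expr1n. Qed.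
Lemma ph4_N1 : (-1 : algC) ^+ 4 = 1. Proof. by rewrite (exprM _ 2 2) sqrrN expr1n expr1n. Qed.
Lemma ph4_i : ('i : algC) ^+ 4 = 1. Proof. by rewrite (exprM _ 2 2) sqrCi sqrrN expr1n. Qed.
Lemma ph4_Ni : (- 'i : algC) ^+ 4 = 1. Proof. by rewrite -mulN1r exprMn ph4_N1 ph4_i mul1r. Qed.

Ltac simpC := rewrite /mul2 /pauli1 /= ?(mulr0, mul0r, mulr1, mul1r, mulrN, mulNr, opprK, addr0, add0r, iiE, oppr0).

Ltac caseA a := case: a => [[|[|[|[|?]]]] ?] //.

Ltac try_ph d := first
  [ exists 1, d; split; [exact: ph4_1 | by case; case; simpC]
  | exists (-1), d; split; [exact: ph4_N1 | by case; case; simpC]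
  | exists 'i, d; split; [exact: ph4_i | by case; case; simpC]
  | exists (-'i), d; split; [exact: ph4_Ni | by case; case; simpC] ].

Lemma P1mul (a b : 'I_4) : exists (ph : algC) (d : 'I_4), ph ^+ 4 = 1 /\
  forall r c, mul2 (pauli1 a) (pauli1 b) r c = ph * pauli1 d r c.
Proof.
caseA a; caseA b; first [try_ph o0 | try_ph o1 | try_ph o2 | try_ph o3].
Qed.

Lemma P1comm (a b : 'I_4) : exists e : algC, e ^+ 2 = 1 /\
  forall r c, mul2 (pauli1 a) (pauli1 b) r c = e * mul2 (pauli1 b) (pauli1 a) r c.
Proof.
caseA a; caseA b; first
  [ exists 1; split; [exact: expr1n | by case; case; simpC]
  | exists (-1); split; [by rewrite sqrrN expr1n | by case; case; simpC]].
Qed.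

Lemma P1sq (a : 'I_4) r c : mul2 (pauli1 a) (pauli1 a) r c = (r == c)%:R.
Proof. by caseA a; case: r; case: c; simpC. Qed.

Lemma cI : ('i : algC)^* = - 'i. Proof. exact: conjCi. Qed.

Lemma cNI : (- 'i : algC)^* = 'i.
Proof. by rewrite rmorphN /= cI opprK. Qed.
Lemma cN1 : (- 1 : algC)^* = - 1.
Proof. by rewrite rmorphN rmorph1. Qed.

Lemma P1adj (a : 'I_4) r c : (pauli1 a c r)^* = pauli1 a r c.
Proof. caseA a; case: r; case: c; rewrite /pauli1 /= ?rmorph0 ?rmorph1 ?cNI ?cI ?cN1 //. Qed.

Lemma P1nz (a : 'I_4) r c : (pauli1 a r c != 0) = ((r (+) c) == flip a).
Proof.
caseA a; case: r; case: c; rewrite /pauli1 /flip /= ?oppr_eq0 ?neq0Ci ?oner_eq0 ?eqxx //.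
Qed.

Lemma P1norm (a : 'I_4) r c : pauli1 a r c != 0 -> `|pauli1 a r c| = 1.
Proof.
caseA a; case: r; case: c; rewrite /pauli1 /= ?eqxx ?normrN ?normCi ?normr1 //.
Qed.


Lemma eq_tens n (f g : 'I_n -> bool -> bool -> algC) :
  (forall q r c, f q r c = g q r c) -> tens f = tens g.
Proof. by move=> H; apply/matrixP => r c; rewrite !mxE; apply: eq_bigr => q _; rewrite H. Qed.

Lemma tens_scale n (ph : 'I_n -> algC) (f : 'I_n -> bool -> bool -> algC) :
  tens (fun q r c => ph q * f q r c) = (\prod_q ph q) *: tens f.
Proof. by apply/matrixP => r c; rewrite !mxE big_split. Qed.

Lemma pauli_mul n (p q : 'I_n -> 'I_4) : exists (ph : algC) (p' : 'I_n -> 'I_4),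
  ph ^+ 4 = 1 /\ pauli p *m pauli q = ph *: pauli p'.
Proof.
have [phf H1] := fin_all_exists (fun x => P1mul (p x) (q x)).
have [df H2] := fin_all_exists H1.
exists (\prod_x phf x), df; split.
  by rewrite -prodrXl big1 // => x _; case: (H2 x).
rewrite !pauliE tens_mul -tens_scale; apply: eq_tens.
by move=> x r c; case: (H2 x).
Qed.

Lemma pauli_comm n (p q : 'I_n -> 'I_4) : exists e : algC,
  e ^+ 2 = 1 /\ pauli p *m pauli q = e *: (pauli q *m pauli p).
Proof.
have [ef H1] := fin_all_exists (fun x => P1comm (p x) (q x)).
exists (\prod_x ef x); split.
  by rewrite -prodrXl big1 // => x _; case: (H1 x).
rewrite !pauliE !tens_mul -tens_scale; apply: eq_tens.
by move=> x r c; case: (H1 x).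
Qed.

Lemma pauli_sq n (p : 'I_n -> 'I_4) : pauli p *m pauli p = 1%:M.
Proof.
rewrite pauliE tens_mul -tens1; apply: eq_tens.
by move=> x r c; rewrite P1sq.
Qed.

Lemma hadjM m k l (A : 'M[algC]_(m, k)) (B : 'M[algC]_(k, l)) :
  adj (A *m B) = adj B *m adj A.
Proof. by rewrite /adj map_mxM trmx_mul. Qed.

Lemma hadjD m k (A B : 'M[algC]_(m, k)) : adj (A + B) = adj A + adj B.
Proof. by rewrite /adj map_mxD raddfD. Qed.

Lemma hadjZ m k (a : algC) (A : 'M[algC]_(m, k)) : adj (a *: A) = a^* *: adj A.
Proof. by apply/matrixP => i j; rewrite !mxE rmorphM. Qed.

Lemma hadj1 m : adj (1%:M : 'M[algC]_m) = 1%:M.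
Proof. by rewrite /adj map_mx1 trmx1. Qed.

Lemma hadjK m k (A : 'M[algC]_(m, k)) : adj (adj A) = A.
Proof. by apply/matrixP => i j; rewrite !mxE conjCK. Qed.

Lemma pauli_adj n (p : 'I_n -> 'I_4) : adj (pauli p) = pauli p.
Proof.
rewrite pauliE tens_adj; apply: eq_tens.
by move=> x r c; rewrite P1adj.
Qed.


Lemma clifford_1 n : clifford (1%:M : 'M[algC]_(2 ^ n)).
Proof.
split; first by rewrite /unitary hadj1 mul1mx.
by move=> c p Hc; exists c, p; rewrite hadj1 mul1mx mulmx1.
Qed.

Lemma e2_cases (e : algC) : e ^+ 2 = 1 -> e = 1 \/ e = -1.
Proof. by move/eqP; rewrite sqrf_eq1 => /orP [/eqP ->|/eqP ->]; [left|right]. Qed.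

Lemma e4 (e : algC) : e ^+ 2 = 1 -> e ^+ 4 = 1.
Proof. by move=> H; rewrite (exprM _ 2 2) H expr1n. Qed.

Lemma clifford_pauli n (a : 'I_n -> 'I_4) : clifford (pauli a).
Proof.
split; first by rewrite /unitary pauli_adj pauli_sq.
move=> c p Hc; have [e [He HA]] := pauli_comm a p.
exists (c * e), p; split; first by rewrite exprMn Hc e4 // mulr1.
rewrite pauli_adj -scalemxAr -scalemxAl HA -scalemxAl -mulmxA pauli_sq mulmx1.
by rewrite scalerA.
Qed.

Lemma expand4 m (A B P : 'M[algC]_m) s :
  (A + s *: B) *m P *m (A + s *: B) =
  A *m P *m A + s *: (A *m P *m B) + s *: (B *m P *m A) + (s * s) *: (B *m P *m B).
Proof.
rewrite !mulmxDl !mulmxDr -!scalemxAl -!scalemxAr !scalerA !addrA.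
by congr (_ + _ + _ + _); rewrite addrC.
Qed.


Lemma add4 (V : zmodType) (x y z w : V) : x + y + z + w = (x + w) + (y + z).
Proof. by rewrite -addrA (addrC z w) addrACA. Qed.

Lemma two_eq : (2 : algC) = 1 + 1.
Proof. by rewrite -mulr2n. Qed.

Lemma clifford_U n (pa pb : 'I_n -> 'I_4) (s al : algC) :
  s ^+ 2 = 1 -> s^* = s -> al^* = al -> al * al * 2 = 1 ->
  pauli pa *m pauli pb = - (pauli pb *m pauli pa) ->
  clifford (al *: (pauli pa + s *: pauli pb)).
Proof.
move=> Hs Hsc Hal Hal2 HAB.
set A := pauli pa; set B := pauli pb; set U := al *: _.
have ss : s * s = 1 by rewrite -expr2.
have adjU : adj U = U by rewrite /U hadjZ hadjD hadjZ !pauli_adj Hsc Hal.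
have HBA : B *m A = - (A *m B) by rewrite HAB opprK.
have gen : forall P : 'M[algC]_(2 ^ n), U *m P *m adj U =
    (al * al) *: ((A + s *: B) *m P *m (A + s *: B)).
  by move=> P; rewrite adjU /U -!scalemxAl -!scalemxAr !scalerA.
split.
  rewrite /unitary -[X in X *m _ = _]mulmx1 gen expand4 !mulmx1 !pauli_sq.
  rewrite HBA scalerN addrK ss scale1r.
  have -> : (1%:M : 'M[algC]_(2 ^ n)) + 1%:M = 2 *: 1%:M by rewrite two_eq scalerDl scale1r.
  by rewrite scalerA Hal2 scale1r.
move=> c p Hc.
have [eA [HeA HA]] := pauli_comm pa p.
have [eB [HeB HB]] := pauli_comm pb p.
set P := pauli p.
have hAPA : A *m P *m A = eA *: P.
  by rewrite HA -scalemxAl -mulmxA pauli_sq mulmx1.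
have hBPB : B *m P *m B = eB *: P.
  by rewrite HB -scalemxAl -mulmxA pauli_sq mulmx1.
have hAPB : A *m P *m B = eA *: (P *m A *m B) by rewrite HA -scalemxAl.
have hBPA : B *m P *m A = - (eB *: (P *m A *m B)).
  by rewrite HB -scalemxAl -mulmxA HBA mulmxN mulmxA scalerN.
have Hsum : (A + s *: B) *m (c *: P) *m (A + s *: B) =
    (c * (eA + eB)) *: P + (c * (s * (eA - eB))) *: (P *m A *m B).
  rewrite -scalemxAr -scalemxAl expand4 hAPA hBPB hAPB hBPA ss scale1r.
  rewrite scalerN !scalerA -scaleNr add4 -!scalerDl scalerDr !scalerA.
  by congr (_ *: _ + _ *: _); rewrite ?mulrBr.
case: (e2_cases HeA) => ?; case: (e2_cases HeB) => ?; subst eA eB.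
- exists c, p; split => //.
  by rewrite gen Hsum subrr !mulr0 scale0r addr0 scalerA -two_eq mulrA (mulrC _ c) -mulrA Hal2 mulr1.
- have [ph1 [q1 [Hph1 H1]]] := pauli_mul p pa.
  have [ph2 [q2 [Hph2 H2]]] := pauli_mul q1 pb.
  exists (c * s * ph1 * ph2), q2; split.
    by rewrite !exprMn Hc Hph1 Hph2 e4 // !mulr1.
  rewrite gen Hsum addrN mulr0 scale0r add0r opprK -two_eq H1 -scalemxAl H2 !scalerA.
  congr (_ *: _).
  transitivity (c * s * ph1 * ph2 * (al * al * 2)); [ring | by rewrite Hal2 mulr1].
- have [ph1 [q1 [Hph1 H1]]] := pauli_mul p pa.
  have [ph2 [q2 [Hph2 H2]]] := pauli_mul q1 pb.
  exists (- (c * s * ph1 * ph2)), q2; split.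
    by rewrite -mulN1r exprMn ph4_N1 mul1r !exprMn Hc Hph1 Hph2 e4 // !mulr1.
  rewrite gen Hsum addNr mulr0 scale0r add0r -opprD -two_eq H1 -scalemxAl H2 !scalerA.
  congr (_ *: _).
  transitivity (- (c * s * ph1 * ph2) * (al * al * 2)); [ring | by rewrite Hal2 mulr1].
- exists (- c), p; split; first by rewrite -mulN1r exprMn ph4_N1 mul1r.
  rewrite gen Hsum subrr !mulr0 scale0r addr0 scalerA -opprD -two_eq.
  congr (_ *: _).
  transitivity (- c * (al * al * 2)); [ring | by rewrite Hal2 mulr1].
Qed.


Definition pX n (i : 'I_n) : 'I_n -> 'I_4 := fun q => if q == i then o1 else o0.
Definition pZX n (i j : 'I_n) : 'I_n -> 'I_4 :=
  fun q => if q == i then o3 else if q == j then o1 else o0.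

Lemma anticomm_XZX n (i j : 'I_n) : i != j ->
  pauli (pX i) *m pauli (pZX i j) = - (pauli (pZX i j) *m pauli (pX i)).
Proof.
move=> Hij; rewrite !pauliE !tens_mul.
rewrite -scaleN1r -(_ : \prod_(q < n) (if q == i then -1 else 1) = -1 :> algC); last first.
  by rewrite (bigD1 i) //= eqxx big1 ?mulr1 // => q /negbTE ->.
rewrite -tens_scale; apply: eq_tens => q r c.
rewrite /pX /pZX; case: (q == i).
  by case: r; case: c; simpC.
by case: (q == j); case: r; case: c; simpC.
Qed.

Lemma P1ket (a : 'I_4) b : val a != 2%N -> pauli1 a b false = (b == flip a)%:R.
Proof. by caseA a; case: b. Qed.

Lemma ketE n (k r : 'I_(2 ^ n)) c : ket k r c = (r == k)%:R.
Proof. by rewrite mxE; case: (r == k). Qed.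

Lemma pauli_ket0 n (p : 'I_n -> 'I_4) (k : 'I_n) :
  (forall q, val (p q) != 2%N) -> (forall q, flip (p q) = (q == k)) ->
  pauli p *m ket0 n = ket_e k.
Proof.
move=> H2 Hf; apply/matrixP => r c; rewrite (ord1 c) pauliE tens_ket0 /ket_e ketE.
under eq_bigr do rewrite P1ket // Hf.
rewrite prod_ind bit_eqP; do 2 f_equal; apply: eq_forallb => q /=.
by rewrite bit_exp2.
Qed.

Lemma pX_ket0 n (i : 'I_n) : pauli (pX i) *m ket0 n = ket_e i.
Proof.
by apply: pauli_ket0 => q; rewrite /pX; case: (q == i).
Qed.

Lemma pZX_ket0 n (i j : 'I_n) : i != j -> pauli (pZX i j) *m ket0 n = ket_e j.
Proof.
move=> Hij; apply: pauli_ket0 => q; rewrite /pZX.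
  by case: (q == i) => //; case: (q == j).
case: eqP => [->|_]; first by rewrite (negbTE Hij).
by case: (q == j).
Qed.

Lemma outerE m (u v : 'cV[algC]_m) r c : (u *m adj v) r c = u r 0 * (v c 0)^*.
Proof. by rewrite mxE big_ord1 !mxE. Qed.

Definition al2 : algC := (sqrtC 2)^-1.

Lemma al2_conj : al2^* = al2.
Proof. by rewrite /al2 fmorphV /= geC0_conj // sqrtC_ge0 ler0n. Qed.

Lemma al2_sq : al2 * al2 * 2 = 1.
Proof.
rewrite /al2 -invfM -expr2 sqrtCK mulVf //.
by rewrite pnatr_eq0.
Qed.


Lemma swap_sum (V : zmodType) n (F : 'I_n -> 'I_n -> V) :
  \sum_a \sum_(b | b != a) F a b = \sum_a \sum_(b | b != a) F b a.
Proof.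
rewrite (exchange_big_dep predT) //=; apply: eq_bigr => a _.
by apply: eq_bigl => b; rewrite eq_sym.
Qed.

Lemma rearr (V : lmodType algC) n (E : 'I_n -> 'I_n -> V) (B : 'M[algC]_n)
    (al : algC) (s : 'I_n -> 'I_n -> algC) :
  B^T = B -> (forall a b, `|B a b| * s a b = B a b) -> (forall a b, s a b * s a b = 1) ->
  al * al * 2 = 1 ->
  \sum_a (B a a - \sum_(b | b != a) `|B a b|) *: E a a +
  \sum_a \sum_(b | b != a) `|B a b| *: ((al * al) *:
     (E a a + s a b *: E a b + s a b *: E b a + (s a b * s a b) *: E b b)) =
  \sum_a \sum_b B a b *: E a b.
Proof.
move=> HBT Hs Hss Hal.
have Bsym a b : B b a = B a b by rewrite -{1}HBT mxE.
have step : forall a b, `|B a b| *: ((al * al) *: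
     (E a a + s a b *: E a b + s a b *: E b a + (s a b * s a b) *: E b b)) =
   (`|B a b| * (al * al)) *: E a a + (`|B a b| * s a b * (al * al)) *: E a b
   + (`|B a b| * s a b * (al * al)) *: E b a + (`|B a b| * (al * al)) *: E b b.
  move=> a b; rewrite Hss scale1r scalerA !scalerDr !scalerA.
  by congr (_ *: _ + _ *: _ + _ *: _ + _ *: _); ring.
under [X in _ + X = _]eq_bigr do under eq_bigr do rewrite step Hs.
under [X in _ + X = _]eq_bigr do rewrite !big_split /=.
rewrite !big_split /= add4.
have dbl x : x * (al * al) + x * (al * al) = x.
  by rewrite -mulrDr -mulr2n -mulr_natr Hal mulr1.
have H1 : \sum_i \sum_(j | j != i) (`|B i j| * (al * al)) *: E i i +
    \sum_i \sum_(j | j != i) (`|B i j| * (al * al)) *: E j j =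
    \sum_i (\sum_(j | j != i) `|B i j|) *: E i i.
  rewrite (swap_sum (fun i j => (`|B i j| * (al * al)) *: E j j)) /= -big_split.
  apply: eq_bigr => i _; rewrite -big_split scaler_suml; apply: eq_bigr => j _ /=.
  by rewrite Bsym -scalerDl dbl.
have H2 : \sum_i \sum_(j | j != i) (B i j * (al * al)) *: E i j +
    \sum_i \sum_(j | j != i) (B i j * (al * al)) *: E j i =
    \sum_i \sum_(j | j != i) B i j *: E i j.
  rewrite (swap_sum (fun i j => (B i j * (al * al)) *: E j i)) /= -big_split.
  apply: eq_bigr => i _; rewrite -big_split; apply: eq_bigr => j _ /=.
  by rewrite Bsym -scalerDl dbl.
rewrite H1 H2 addrA -!big_split /=.
apply: eq_bigr => a _; rewrite [in RHS](bigD1 a) //=.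
by rewrite -scalerDl subrK.
Qed.


Definition sgn (x : algC) : algC := if 0 <= x then 1 else -1.

Lemma sgnP x : x \is Num.real -> `|x| * sgn x = x.
Proof.
rewrite /sgn => Hx; case: (boolP (0 <= x)) => h; first by rewrite ger0_norm ?mulr1.
have hx : x < 0 by rewrite real_ltNge ?real0.
by rewrite ltr0_norm // mulrN1 opprK.
Qed.

Lemma sgn_sq x : sgn x * sgn x = 1.
Proof. by rewrite /sgn; case: (0 <= x); rewrite ?mulr1 ?mulrNN ?mulr1. Qed.

Lemma sgn_conj x : (sgn x)^* = sgn x.
Proof. by rewrite /sgn; case: (0 <= x); rewrite ?rmorph1 ?cN1. Qed.

Definition EE n (a b : 'I_n) : 'M[algC]_(2 ^ n) := ket_e a *m adj (ket_e b).

Lemma stab_U n (a b : 'I_n) (s : algC) : a != b -> s^* = s ->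
  stab_state (al2 *: (pauli (pX a) + s *: pauli (pZX a b))) =
  (al2 * al2) *: (EE a a + s *: EE a b + s *: EE b a + (s * s) *: EE b b).
Proof.
move=> Hab Hs.
have Hv : (al2 *: (pauli (pX a) + s *: pauli (pZX a b))) *m ket0 n =
    al2 *: (ket_e a + s *: ket_e b).
  by rewrite -scalemxAl mulmxDl; congr (_ *: (_ + _)); rewrite ?pX_ket0 // -scalemxAl pZX_ket0.
rewrite /stab_state Hv.
rewrite hadjZ al2_conj -scalemxAr -scalemxAl scalerA hadjD hadjZ Hs.
rewrite mulmxDl !mulmxDr -!scalemxAl -!scalemxAr !scalerA /EE.
by rewrite !addrA; congr (_ *: (_ + _ + _ + _)); rewrite addrC.
Qed.

Lemma backward n (p0 : algC) (B : 'M[algC]_n) :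
  (forall i j, B i j \is Num.real) -> B^T = B -> 0 <= p0 -> p0 + \tr B = 1 ->
  (forall i, \sum_(j | j != i) `|B i j| <= B i i) -> in_stab_polytope (rho_of p0 B).
Proof.
move=> Hreal HBT Hp0 Htr Hdd.
pose wt (t : ('I_1 + 'I_n) + ('I_n * 'I_n)) : algC := match t with
  | inl (inl _) => p0
  | inl (inr a) => B a a - \sum_(j | j != a) `|B a j|
  | inr p => if p.1 != p.2 then `|B p.1 p.2| else 0 end.
pose Cl (t : ('I_1 + 'I_n) + ('I_n * 'I_n)) : 'M[algC]_(2 ^ n) := match t with
  | inl (inl _) => 1%:M
  | inl (inr a) => pauli (pX a)
  | inr p => if p.1 != p.2 then
       al2 *: (pauli (pX p.1) + sgn (B p.1 p.2) *: pauli (pZX p.1 p.2)) else 1%:M end.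
exists #|{: ('I_1 + 'I_n) + ('I_n * 'I_n)}|, (fun k => wt (enum_val k)), (fun k => Cl (enum_val k)).
split; [|split; [|split]].
- move=> k; case: (enum_val k) => [[_|a]|p] /=; first exact: Hp0.
    by rewrite subr_ge0.
  by case: ifP.
- rewrite -(big_enum_val wt) (eq_bigl xpredT) // !big_sumType big_ord1 /=.
  rewrite -(pair_bigA _ (fun a b => if a != b then `|B a b| else 0)) /=.
  rewrite -addrA -big_split /= -Htr /mxtrace; congr (_ + _); apply: eq_bigr => a _.
  rewrite -big_mkcond /= [X in _ + X](eq_bigl (fun b => b != a)) ?subrK // => b; by rewrite eq_sym.
- move=> k; case: (enum_val k) => [[_|a]|p] /=.
  + exact: clifford_1.
  + exact: clifford_pauli.
  case: ifP => [Hp|_]; last exact: clifford_1.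
  apply: clifford_U; rewrite ?sgn_conj ?al2_conj ?al2_sq //.
    by rewrite expr2 sgn_sq.
  exact: anticomm_XZX.
- rewrite -(big_enum_val (fun t => wt t *: stab_state (Cl t))) (eq_bigl xpredT) //.
  rewrite !big_sumType big_ord1 /= /rho_of -addrA.
  have -> : stab_state (1%:M : 'M[algC]_(2 ^ n)) = ket0 n *m adj (ket0 n).
    by rewrite /stab_state mul1mx.
  congr (_ + _).
  rewrite -(rearr (@EE n) (al := al2) (s := fun a b => sgn (B a b))) //; first last.
  + exact: al2_sq.
  + by move=> a b; rewrite sgn_sq.
  + by move=> a b; rewrite sgnP.
  congr (_ + _).
    by apply: eq_bigr => a _; rewrite /stab_state pX_ket0.
  rewrite -(pair_bigA _ (fun a b => (if a != b then `|B a b| else 0) *: stab_state (if a != b then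
       al2 *: (pauli (pX a) + sgn (B a b) *: pauli (pZX a b)) else 1%:M))) /=.
  apply: eq_bigr => a _; rewrite big_mkcond; apply: eq_bigr => b _ /=.
  rewrite eq_sym; case: ifP => Hab; last by rewrite scale0r.
  by rewrite stab_U ?sgn_conj.
Qed.


Definition pZ n (S : {ffun 'I_n -> bool}) : 'I_n -> 'I_4 := fun q => if S q then o3 else o0.

Lemma ket0E n (r : 'I_(2 ^ n)) c : ket0 n r c = (r == Ordinal (zero_lt_exp2 n))%:R.
Proof. exact: ketE. Qed.

Lemma eq0_bits n (r : 'I_(2 ^ n)) :
  (r == Ordinal (zero_lt_exp2 n)) = [forall q : 'I_n, bit q r == false].
Proof. by rewrite bit_eqP; apply: eq_forallb => q /=; rewrite bit0n. Qed.

Lemma ket0_decomp n : ket0 n *m adj (ket0 n) =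
  (2 ^ n)%:R^-1 *: \sum_(S : {ffun 'I_n -> bool}) pauli (pZ S).
Proof.
apply/matrixP => r c; rewrite outerE !ket0E conjC_nat mxE summxE.
under eq_bigr do rewrite pauliE mxE.
rewrite /pZ.
rewrite -(bigA_distr_bigA (fun (q : 'I_n) (b : bool) =>
   pauli1 (if b then o3 else o0) (bit q r) (bit q c))) /=.
under eq_bigr => q _.
  rewrite big_bool /= (_ : pauli1 o3 (bit q r) (bit q c) + pauli1 o0 (bit q r) (bit q c)
     = 2 * ((bit q r == false) && (bit q c == false))%:R); last first.
    by case: (bit q r); case: (bit q c); rewrite /pauli1 /= ?addr0 ?mulr0 ?mulr1 ?addNr // two_eq.
  over.
rewrite big_split /= prodr_const card_ord prod_ind natrX mulrA mulVf ?mul1r; last first.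
  by rewrite expf_neq0 // pnatr_eq0.
rewrite !eq0_bits -natrM mulnb; do 2 f_equal.
apply/andP/forallP => [[/forallP H1 /forallP H2] q | H]; first by rewrite H1 H2.
by split; apply/forallP => q; case/andP: (H q).
Qed.

Lemma pZ_ket0 n (S : {ffun 'I_n -> bool}) : pauli (pZ S) *m ket0 n = ket0 n.
Proof.
apply/matrixP => r c; rewrite (ord1 c) pauliE tens_ket0 ket0E.
have H q b : pauli1 (pZ S q) b false = (b == false)%:R.
  by rewrite /pZ; case: (S q); case: b.
under eq_bigr do rewrite H.
by rewrite prod_ind eq0_bits.
Qed.


Lemma norm4 (c : algC) : c ^+ 4 = 1 -> `|c| = 1.
Proof.
move=> H; apply/eqP; rewrite -(@pexpr_eq1 _ _ 4) // -normrX H normr1 //.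
Qed.

Lemma stab_mag n (C : 'M[algC]_(2 ^ n)) (x y z w : 'I_(2 ^ n)) : clifford C ->
  (C *m ket0 n) x 0 != 0 -> (C *m ket0 n) y 0 != 0 ->
  (forall q : 'I_n, bit q w = bit q z (+) bit q x (+) bit q y) ->
  `|(C *m ket0 n) z 0| = `|(C *m ket0 n) w 0|.
Proof.
move=> HC Hx Hy Hw.
set psi := C *m ket0 n.
have Hu : adj C *m C = 1%:M by apply: mulmx1C; case: HC.
have Hst : psi *m adj psi =
    (2 ^ n)%:R^-1 *: \sum_(S : {ffun 'I_n -> bool}) (C *m pauli (pZ S) *m adj C).
  rewrite /psi hadjM mulmxA -[C *m ket0 n *m adj (ket0 n)]mulmxA ket0_decomp.
  by rewrite -scalemxAr -scalemxAl mulmx_sumr mulmx_suml.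
have Hxy : (psi *m adj psi) x y != 0 by rewrite outerE mulf_neq0 // conjC_eq0.
have [S HS] : exists S, (C *m pauli (pZ S) *m adj C) x y != 0.
  case: (boolP [exists S, (C *m pauli (pZ S) *m adj C) x y != 0]) => [/existsP [S HS]|/existsPn Hno].
    by exists S.
  move: Hxy; rewrite Hst mxE summxE big1 ?mulr0 ?eqxx // => S _.
  by apply/eqP; apply: negbNE (Hno S).
have [c' [p' [Hc' HM]]] := HC.2 1 (pZ S) (expr1n _ _).
rewrite scale1r in HM.
have Hfix : (c' *: pauli p') *m psi = psi.
  rewrite -HM /psi -!mulmxA (mulmxA (adj C)) Hu mul1mx.
  by rewrite pZ_ket0.
have Hp'xy : pauli p' x y != 0.
  by move: HS; rewrite HM mxE mulf_eq0 negb_or => /andP [].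
have Hflip : forall q : 'I_n, (bit q x (+) bit q y) = flip (p' q).
  move=> q; move: Hp'xy; rewrite pauliE mxE.
  move/prodf_neq0 => H; apply/eqP; rewrite -P1nz; exact: H.
have Hsum : psi z 0 = c' * (pauli p' z w * psi w 0).
  rewrite -{1}Hfix -scalemxAl mxE; congr (_ * _).
  rewrite mxE (bigD1 w) //= big1 ?addr0 // => t Ht.
  have [q Hq] : exists q : 'I_n, bit q t != bit q w.
    apply/existsP; move: Ht; rewrite bit_eqP; apply: contraR => /existsPn H.
    by apply/forallP => q; have := H q; rewrite negbK.
  rewrite pauliE mxE (bigD1 q) //= (_ : pauli1 _ _ _ = 0) ?mul0r //.
  apply/eqP; rewrite -[_ == 0]negbK P1nz -Hflip.
  by move: Hq; rewrite Hw; case: (bit q t); case: (bit q w); case: (bit q z); case: (bit q x); case: (bit q y).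
rewrite Hsum !normrM norm4 // mul1r pauliE mxE normr_prod big1 ?mul1r // => q _.
apply: P1norm; rewrite P1nz -Hflip Hw.
by case: (bit q z); case: (bit q x); case: (bit q y).
Qed.


Definition ei n (i : 'I_n) : 'I_(2 ^ n) := Ordinal (exp2_lt i).
Definition t3 n (i j k : 'I_n) : 'I_(2 ^ n) :=
  Ordinal (numb_lt (fun q => [|| q == i, q == j | q == k]) n).

Lemma bit_ei n (i q : 'I_n) : bit q (ei i) = (q == i).
Proof. by rewrite /ei /= bit_exp2. Qed.

Lemma bit_t3 n (i j k q : 'I_n) : bit q (t3 i j k) = [|| q == i, q == j | q == k].
Proof. by rewrite /t3 /= (bit_numb _ (ltn_ord q)). Qed.

Definition Lf n (i : 'I_n) (s : 'I_n -> algC) (M : 'M[algC]_(2 ^ n)) : algC :=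
  M (ei i) (ei i) - \sum_(j | j != i) (s j / 2) * (M (ei i) (ei j) + M (ei j) (ei i))
  + \sum_(j | j != i) \sum_(k | (k != i) && (k != j)) M (t3 i j k) (t3 i j k) / 2.

Lemma sum_swap_w (I K : finType) (P : pred I) (c : I -> algC) (w : K -> algC) (G : K -> I -> algC) :
  \sum_(j | P j) c j * (\sum_k w k * G k j) = \sum_k w k * \sum_(j | P j) c j * G k j.
Proof.
under eq_bigr do rewrite mulr_sumr.
rewrite exchange_big /=; apply: eq_bigr => k _; rewrite mulr_sumr.
by apply: eq_bigr => j _; rewrite mulrCA.
Qed.

Lemma Lf_lin n (i : 'I_n) s m (w : 'I_m -> algC) (F : 'I_m -> 'M[algC]_(2 ^ n))
  (M : 'M[algC]_(2 ^ n)) : (forall a b, M a b = \sum_k w k * F k a b) ->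
  Lf i s M = \sum_k w k * Lf i s (F k).
Proof.
move=> E.
rewrite /Lf E.
under [X in _ - X + _ = _]eq_bigr do rewrite !E -big_split /=.
under [X in _ + X = _]eq_bigr do under eq_bigr do rewrite E mulr_suml.
under [RHS]eq_bigr do rewrite mulrDr mulrBr.
rewrite big_split sumrB /=; congr (_ - _ + _).
  under eq_bigr do under eq_bigr do rewrite -mulrDr.
  by rewrite sum_swap_w.
under eq_bigr do rewrite exchange_big /=.
rewrite exchange_big /=; apply: eq_bigr => k _.
rewrite mulr_sumr; apply: eq_bigr => j _; rewrite mulr_sumr; apply: eq_bigr => l _.
by rewrite mulrA.
Qed.


Lemma re_bound (s z : algC) : s = 1 \/ s = -1 -> s / 2 * (z + z^*) <= `|z|.
Proof.
have H (w : algC) : (w + w^*) / 2 <= `|w| by rewrite -ReE; exact: (leif_Re_Creal w).1.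
case=> ->; first by rewrite mul1r mulrC; apply: H.
rewrite -normrN (_ : -1 / 2 * (z + z^*) = (- z + (- z)^*) / 2) ?H //.
by rewrite rmorphN; ring.
Qed.

Lemma bool_sq (b : bool) : (b%:R : algC) * b%:R = b%:R.
Proof. by case: b; rewrite ?mulr1 ?mulr0. Qed.

Lemma nat_poly_ge0 (m : nat) : 0 <= ((m%:R : algC) - 1) * (m%:R - 2).
Proof.
case: m => [|[|m]]; first by rewrite !sub0r mulrNN mul1r ler0n.
  by rewrite subrr mul0r.
by apply: mulr_ge0; rewrite subr_ge0 ?ler1n ?ler_nat.
Qed.

Lemma Lf_stab n (i : 'I_n) (s : 'I_n -> algC) (C : 'M[algC]_(2 ^ n)) :
  clifford C -> (forall j, s j = 1 \/ s j = -1) -> 0 <= Lf i s (stab_state C).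
Proof.
move=> HC Hs.
set psi := C *m ket0 n.
have sig a b : stab_state C a b = psi a 0 * (psi b 0)^* by rewrite /stab_state outerE.
set N := `|psi (ei i) 0| ^+ 2.
have HN : 0 <= N by rewrite exprn_ge0.
pose bb (j : 'I_n) : bool := psi (ei j) 0 != 0.
pose u (j : 'I_n) : algC := (nat_of_bool (bb j))%:R.
pose m := (\sum_(j | j != i) (nat_of_bool (bb j)))%N.
have HU : \sum_(j | j != i) u j = m%:R by rewrite natr_sum.
have Hi : forall j, j != i -> s j / 2 * (stab_state C (ei i) (ei j) + stab_state C (ei j) (ei i)) <= N * u j.
  move=> j Hji; rewrite !sig.
  have -> : psi (ei j) 0 * (psi (ei i) 0)^* = (psi (ei i) 0 * (psi (ei j) 0)^*)^*.
    by rewrite rmorphM /= conjCK mulrC.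
  case: (eqVneq (psi (ei j) 0) 0) => [Hb|Hb].
    by rewrite Hb rmorph0 mulr0 rmorph0 addr0 mulr0 /u /bb Hb eqxx mulr0.
  case: (eqVneq (psi (ei i) 0) 0) => [Ha|Ha].
    by rewrite Ha mul0r rmorph0 addr0 mulr0 /N Ha normr0 expr0n mul0r.
  rewrite /u /bb Hb mulr1 (le_trans (re_bound _ (Hs j))) //.
  rewrite normrM norm_conjC /N expr2 (stab_mag (x := ei i) (y := ei j) (z := ei i) (w := ei j) HC Ha Hb) //.
  by move=> q; rewrite !bit_ei; case: (q == i); case: (q == j).
have Hii : forall j k, j != i -> (k != i) && (k != j) ->
    N * (u j * u k) / 2 <= stab_state C (t3 i j k) (t3 i j k) / 2.
  move=> j k Hji /andP [Hki Hkj]; apply: ler_wpM2r; first by rewrite invr_ge0 ler0n.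
  rewrite sig -normCK.
  case: (eqVneq (psi (ei j) 0) 0) => [Hb|Hb].
    by rewrite /u /bb Hb eqxx mul0r mulr0 exprn_ge0.
  case: (eqVneq (psi (ei k) 0) 0) => [Hc|Hc].
    by rewrite /u /bb Hc eqxx mulr0 mulr0 exprn_ge0.
  rewrite /u /bb Hb Hc mulr1 mulr1 /N (stab_mag (x := ei j) (y := ei k) (z := ei i) (w := t3 i j k) HC Hb Hc) //.
  move=> q; rewrite bit_t3 !bit_ei.
  have [e1 e2 e3] : [/\ (i == j) = false, (j == i) = false & (i == k) = false].
    by split; apply/negbTE; rewrite // eq_sym.
  have [e4 e5 e6] : [/\ (k == i) = false, (j == k) = false & (k == j) = false].
    by split; apply/negbTE; rewrite // eq_sym.
  case: (eqVneq q i) => [->|Hqi]; first by rewrite ?eqxx ?e1 ?e2 ?e3 ?e4 ?e5 ?e6.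
  case: (eqVneq q j) => [->|Hqj]; first by rewrite ?eqxx ?e1 ?e2 ?e3 ?e4 ?e5 ?e6.
  by case: (q == k).
have Hlow : N - \sum_(j | j != i) N * u j +
    \sum_(j | j != i) \sum_(k | (k != i) && (k != j)) N * (u j * u k) / 2 <= Lf i s (stab_state C).
  rewrite /Lf; apply: lerD; last first.
    by apply: ler_sum => j Hj; apply: ler_sum => k Hk; apply: Hii.
  apply: lerB; first by rewrite sig -normCK.
  by apply: ler_sum => j Hj; apply: Hi.
apply: le_trans Hlow.
have S1 : \sum_(j | j != i) N * u j = N * m%:R by rewrite -mulr_sumr HU.
have S2 : \sum_(j | j != i) \sum_(k | (k != i) && (k != j)) N * (u j * u k) / 2 =
    \sum_(j | j != i) N / 2 * (u j * m%:R - u j).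
  apply: eq_bigr => j Hj.
  rewrite -HU (bigD1 j Hj) /= [u j * (_ + _)]mulrDr (_ : u j * u j = u j) ?bool_sq //.
  rewrite (addrC (u j)) addrK mulr_sumr mulr_sumr.
  by apply: eq_bigr => k _; rewrite mulrAC mulrA.
rewrite S1 S2 -mulr_sumr sumrB -mulr_suml HU.
rewrite (_ : N - N * m%:R + N / 2 * (m%:R * m%:R - m%:R) =
   N * ((m%:R - 1) * (m%:R - 2) / 2)); last first.
  by field; rewrite ?pnatr_eq0.
apply: mulr_ge0 => //; apply: mulr_ge0; first exact: nat_poly_ge0.
by rewrite invr_ge0 ler0n.
Qed.


Lemma ei_eq n (c a : 'I_n) : (ei c == ei a) = (c == a).
Proof.
apply/eqP/eqP => [H|->//]; apply/val_inj; move: (congr1 val H) => /= /eqP.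
by rewrite eqn_exp2l // => /eqP.
Qed.

Lemma ei_neq0 n (c : 'I_n) : (ei c == Ordinal (zero_lt_exp2 n)) = false.
Proof. by apply/negbTE; rewrite -val_eqE /= -lt0n expn_gt0. Qed.

Lemma rho_ee n p0 (B : 'M[algC]_n) (c d : 'I_n) : rho_of p0 B (ei c) (ei d) = B c d.
Proof.
rewrite /rho_of mxE mxE outerE !ket0E ei_neq0 mul0r mulr0 add0r summxE.
under eq_bigr do rewrite summxE.
have Hab a b : (B a b *: (ket_e a *m adj (ket_e b))) (ei c) (ei d) =
    B a b * ((c == a) && (d == b))%:R.
  by rewrite mxE outerE /ket_e !ketE -/(ei a) -/(ei b) !ei_eq conjC_nat -natrM mulnb.
under eq_bigr do under eq_bigr do rewrite Hab.
rewrite (bigD1 c) //= [X in _ + X]big1 ?addr0 => [|a Ha]; last first.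
  by rewrite big1 // => b _; rewrite eq_sym (negbTE Ha) mulr0.
rewrite (bigD1 d) //= [X in _ + X]big1 ?addr0 => [|b Hb]; last first.
  by rewrite eqxx eq_sym (negbTE Hb) mulr0.
by rewrite !eqxx mulr1.
Qed.

Lemma rho_tt n p0 (B : 'M[algC]_n) (i j k : 'I_n) : j != i -> k != i -> k != j ->
  rho_of p0 B (t3 i j k) (t3 i j k) = 0.
Proof.
move=> Hji Hki Hkj.
have Hne : forall a : 'I_n, (t3 i j k == ei a) = false.
  move=> a; apply/negbTE/negP => /eqP H.
  case: (eqVneq a i) => [Ha|Ha].
    have := bit_t3 i j k j; rewrite H bit_ei Ha (negbTE Hji) eqxx orbT //.
  have := bit_t3 i j k i; rewrite H bit_ei eq_sym (negbTE Ha) eqxx //.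
have H0 : (t3 i j k == Ordinal (zero_lt_exp2 n)) = false.
  apply/negbTE/negP => /eqP H.
  have := bit_t3 i j k i; rewrite H bit0n eqxx //.
rewrite /rho_of mxE mxE outerE !ket0E H0 mul0r mulr0 add0r summxE big1 // => a _.
by rewrite summxE big1 // => b _; rewrite mxE outerE /ket_e !ketE -/(ei a) -/(ei b) !Hne mul0r mulr0.
Qed.

Lemma Lf_rho n p0 (B : 'M[algC]_n) (i : 'I_n) :
  (forall a b, B a b \is Num.real) -> B^T = B ->
  Lf i (fun j => sgn (B i j)) (rho_of p0 B) = B i i - \sum_(j | j != i) `|B i j|.
Proof.
move=> Hreal HBT.
have Bsym a b : B b a = B a b by rewrite -{1}HBT mxE.
rewrite /Lf rho_ee [X in _ - _ + X]big1 ?addr0; last first.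
  move=> j Hj; rewrite big1 // => k /andP [Hki Hkj].
  by rewrite rho_tt // mul0r.
congr (_ - _); apply: eq_bigr => j _.
rewrite !rho_ee (Bsym i j).
have hx := sgnP (Hreal i j).
transitivity (sgn (B i j) * B i j); first by field; rewrite ?pnatr_eq0.
by rewrite -[X in _ * X = _]hx mulrCA sgn_sq mulr1.
Qed.

Lemma forward n p0 (B : 'M[algC]_n) :
  (forall a b, B a b \is Num.real) -> B^T = B ->
  in_stab_polytope (rho_of p0 B) -> forall i, \sum_(j | j != i) `|B i j| <= B i i.
Proof.
move=> Hreal HBT [m [w [C [Hw [Hsum [HC Hrho]]]]]] i.
rewrite -subr_ge0 -(Lf_rho p0 i Hreal HBT).
rewrite (@Lf_lin n i _ m w (fun k => stab_state (C k))); last first.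
  by move=> a b; rewrite Hrho summxE; apply: eq_bigr => k _; rewrite mxE.
apply: sumr_ge0 => k _; apply: mulr_ge0; first exact: Hw.
apply: Lf_stab; first exact: HC.
by move=> j; rewrite /sgn; case: (0 <= B i j); [left|right].
Qed.

Unset Implicit Arguments.

Theorem lemmaS1 (n : nat) (p0 : algC) (B : 'M[algC]_n) :
  (2 <= n)%N ->
  (forall i j, B i j \is Num.real) ->
  B^T = B ->
  psd B ->
  p0 + \tr B = 1 ->
  density (rho_of p0 B) ->
  (in_stab_polytope (rho_of p0 B) <->
   forall i : 'I_n, \sum_(j < n | j != i) `|B i j| <= B i i).
Proof.
move=> _ Hreal HBT _ Htr [[_ Hpsd] _]; split; first exact: forward.
apply: backward => //.
set O := Ordinal (zero_lt_exp2 n).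
have e1 : (adj (ket0 n) *m rho_of p0 B *m ket0 n) 0 0 = rho_of p0 B O O.
  rewrite mxE (bigD1 O) //= big1 ?addr0 => [|k Hk]; last by rewrite ket0E (negbTE Hk) mulr0.
  rewrite ket0E eqxx mulr1 mxE (bigD1 O) //= big1 ?addr0 => [|k Hk]; last first.
    by rewrite !mxE (negbTE Hk) /= conjC0 mul0r.
  by rewrite !mxE eqxx /= conjC1 mul1r.
have e2 : rho_of p0 B O O = p0.
  rewrite /rho_of mxE mxE outerE !ket0E eqxx conjC1 !mulr1 summxE big1 ?addr0 // => a _.
  rewrite summxE big1 // => b _.
  by rewrite mxE outerE /ket_e !ketE -/(ei a) eq_sym ei_neq0 mul0r mulr0.
by have := Hpsd (ket0 n); rewrite e1 e2.
Qed.
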